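(* Let $k,l\ge m>1$ be integers. There exist mutually unbiased equiangular tight frames $(v_1,\dots,v_k)$ and $(w_1,\dots,w_l)$ for $\mathbb{R}^m$ if and only if there exists a matrix $X\in\mathbb{R}^{k\times l}$ such that: (i) $X_{ij}\in\{-1,+1\}$ for all $i,j$; (ii) $XX^\top X=aX$ for some $a\in\mathbb{R}$; (iii) $|XX^\top|_{i,i'}$ is constant over all $i\neq i'$; (iv) $|X^\top X|_{j,j'}$ is constant over all $j\ne j'$; (v) $X$ has rank $m$. Moreover, when this occurs, the quantities $$\frac{kl}{m},\qquad k\sqrt{\frac{l-m}{m(l-1)}},\qquad l\sqrt{\frac{k-m}{m(k-1)}}$$ are all integers.
   Context: A system of unit vectors $(v_1,\dots,v_n)$ in $\mathbb{R}^m$ is an equiangular tight frame if $|\langle v_i,v_j\rangle|$ is the same constant for all $i\ne j$ and $VV^\top=\frac{n}{m}\mathrm{I}_m$, where $V$ has columns $v_i$. Two equiangular tight frames $(v_1,\dots,v_k)$, $(w_1,\dots,w_l)$ for $\mathbb{R}^m$ are mutually unbiased if there is $c\in\mathbb{R}$ with $|\langle v_i,w_j\rangle|=c$ for all $i,j$. $|A|$ denotes the entrywise absolute value of a matrix $A$. *)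

(* Defs.v *)
From HB Require Import structures.
From mathcomp Require Import all_boot all_order all_algebra.
From mathcomp Require Import reals.
Set Implicit Arguments. Unset Strict Implicit. Unset Printing Implicit Defensive.
Import Order.TTheory GRing.Theory Num.Theory.
Local Open Scope ring_scope.

(* Vectors v_1..v_n in R^m are the columns of V : 'M_(m, n);
   <v_i, v_j> = (V^T *m V) i j. *)
Definition is_ETF (R : realType) (m n : nat) (V : 'M[R]_(m, n)) : Prop :=
  (forall i : 'I_n, (V^T *m V) i i = 1) /\
  (exists c : R, forall i j : 'I_n, i != j -> `|(V^T *m V) i j| = c) /\
  V *m V^T = (n%:R / m%:R)%:M.

Definition mutually_unbiased (R : realType) (m k l : nat)
  (V : 'M[R]_(m, k)) (W : 'M[R]_(m, l)) : Prop :=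
  exists c : R, forall (i : 'I_k) (j : 'I_l), `|(V^T *m W) i j| = c.

Definition exists_MU_ETFs (R : realType) (m k l : nat) : Prop :=
  exists (V : 'M[R]_(m, k)) (W : 'M[R]_(m, l)),
    is_ETF V /\ is_ETF W /\ mutually_unbiased V W.

Definition absmx (R : realType) (p q : nat) (A : 'M[R]_(p, q)) : 'M[R]_(p, q) :=
  \matrix_(i, j) `|A i j|.

Definition good_X (R : realType) (m k l : nat) (X : 'M[R]_(k, l)) : Prop :=
  (forall i j, X i j = 1 \/ X i j = -1) /\
  (exists a : R, X *m X^T *m X = a *: X) /\
  (exists c : R, forall i i' : 'I_k, i != i' -> absmx (X *m X^T) i i' = c) /\
  (exists c : R, forall j j' : 'I_l, j != j' -> absmx (X^T *m X) j j' = c) /\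
  \rank X = m.

Definition is_integer (R : realType) (x : R) : Prop := exists z : int, x = z%:~R.

(* Main.v *)
Require Import Defs.
From HB Require Import structures.
From mathcomp Require Import all_boot all_order all_algebra.
From mathcomp Require Import reals.
From mathcomp Require Import zify ring lra.
Import Order.TTheory GRing.Theory Num.Theory.
Local Open Scope ring_scope.

Lemma gs_lemma (R : rcfType) (n : nat) : forall r (A : 'M[R]_(r, n)),
  \rank A = r -> exists U : 'M[R]_(r, n), U *m U^T = 1%:M /\ (U <= A)%MS.
Proof.
elim=> [|r IH] A rA.
  by exists A; split; [rewrite [LHS]flatmx0 [RHS]flatmx0|].
pose A' : 'M[R]_(1 + r, n) := A.
pose a := usubmx A'; pose B := dsubmx A'.
have eA : A = col_mx a B by rewrite vsubmxK.
have rB : \rank B = r.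
  apply/eqP; rewrite eqn_leq rank_leq_row /=.
  have := mxrank_adds_leqif a B; rewrite addsmxE -eA rA => /leqifP.
  have := rank_leq_row a.
  case: ifP => _ h1 h2; first by lia. by lia.
have [U1 [hU1 sU1]] := IH B rB.
have rU1 : \rank U1 = r.
  apply/eqP; rewrite eqn_leq rank_leq_row /=.
  by have := mxrankM_maxl U1 U1^T; rewrite hU1 mxrank1.
have sBU1 : (B <= U1)%MS.
  by have := mxrank_leqif_sup sU1 => /leqifP; rewrite rB rU1 ltnn; case: ifP.
pose v := a - a *m U1^T *m U1.
have vU1 : v *m U1^T = 0.
  by rewrite /v mulmxBl -!mulmxA hU1 mulmx1 subrr.
pose s := (v *m v^T) 0 0.
have sE : s = \sum_j v 0 j ^+ 2.
  by rewrite /s mxE; apply: eq_bigr => j _; rewrite !mxE expr2.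
have s_ge0 : 0 <= s by rewrite sE sumr_ge0 // => j _; rewrite sqr_ge0.
have s_neq0 : s != 0.
  apply/negP => /eqP s0.
  have v0 : v = 0 :> 'rV[R]_n.
    apply/rowP => j; rewrite [RHS]mxE.
    have := @psumr_eq0P R _ xpredT (fun j => v 0 j ^+ 2) (fun j _ => sqr_ge0 _) _ j.
    by rewrite -sE s0 => /(_ erefl isT) /eqP; rewrite sqrf_eq0 => /eqP.
  have aU : (a <= U1)%MS.
    have -> : a = a *m U1^T *m U1 by apply/eqP; rewrite -subr_eq0 -/v v0.
    exact: submxMl.
  have : (\rank (col_mx a B) <= \rank U1)%N.
    by apply: mxrankS; rewrite col_mx_sub aU sBU1.
  by rewrite -eA rA rU1 ltnn.
pose u := (Num.sqrt s)^-1 *: v.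
have sq : Num.sqrt s != 0 by rewrite sqrtr_eq0 -ltNge lt_def s_neq0.
have uu : u *m u^T = 1%:M.
  rewrite /u linearZ /= -scalemxAl -scalemxAr scalerA.
  rewrite [v *m v^T]mx11_scalar -/s -scalemx1 scalerA.
  rewrite -expr2 exprVn sqr_sqrtr // mulVf // scale1r.
  by apply/matrixP=> i j; rewrite (ord1 i) (ord1 j) !mxE.
have uU1 : u *m U1^T = 0 by rewrite /u -scalemxAl vU1 scaler0.
have hU : (col_mx u U1) *m (col_mx u U1)^T = 1%:M :> 'M_(1 + r).
  rewrite tr_col_mx mul_col_row uu uU1.
  have -> : U1 *m u^T = 0 by rewrite -[U1]trmxK -trmx_mul uU1 trmx0.
  by rewrite hU1 scalar_mx_block.
have eA' : A' = col_mx a B by rewrite vsubmxK.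
have sU : (col_mx u U1 <= A')%MS.
  rewrite col_mx_sub (submx_trans sU1) ?andbT; last first.
    by rewrite eA' -addsmxE addsmxSr.
  apply: scalemx_sub; rewrite /v.
  have sa : (a <= A')%MS by rewrite eA' -addsmxE addsmxSl.
  apply: addmx_sub => //; rewrite -scaleN1r; apply: scalemx_sub.
  apply: submx_trans (submxMl _ _) _; apply: submx_trans sU1 _.
  by rewrite eA' -addsmxE addsmxSr.
by exists (col_mx u U1); split.
Qed.

Lemma proj_lemma (R : fieldType) k l m (X : 'M[R]_(k, l)) (U : 'M[R]_(m, k)) a :
  a != 0 -> X *m X^T *m X = a *: X -> U *m U^T = 1%:M ->
  (U <= X^T)%MS -> (X^T <= U)%MS -> U^T *m U = a^-1 *: (X *m X^T).
Proof.
move=> a0 hX hU /submxP [B eB] /submxP [D eD].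
pose P := a^-1 *: (X *m X^T).
have h1 : X^T *m X *m X^T = a *: X^T.
  by rewrite -linearZ /= -hX !trmx_mul trmxK mulmxA.
have PT : P^T = P by rewrite /P linearZ /= trmx_mul trmxK.
have UP : U *m P = U.
  rewrite /P -scalemxAr eB -!mulmxA [X^T *m (X *m X^T)]mulmxA h1.
  by rewrite -scalemxAr scalerA mulVf // scale1r.
have PU : P *m U^T = U^T by rewrite -[P]PT -trmx_mul UP.
have PUU : P *m (U^T *m U) = P.
  rewrite /P -!scalemxAl; congr (_ *: _).
  by rewrite eD -!mulmxA [U *m (U^T *m U)]mulmxA hU mul1mx.
by rewrite -/P -[in RHS]PUU mulmxA PU.
Qed.

Lemma bwd (R : realType) k l m (hm : (1 < m)%N) (hk : (m <= k)%N) (hl : (m <= l)%N)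
  (X : 'M[R]_(k, l)) : good_X m X -> exists_MU_ETFs R m k l.
Proof.
case=> hpm [[a ha] [[cr hcr] [[cc hcc] rX]]].
have k0 : (0 < k)%N by lia.
have l0 : (0 < l)%N by lia.
have m0 : (0 < m)%N by lia.
have kR : k%:R != 0 :> R by rewrite pnatr_eq0 -lt0n.
have lR : l%:R != 0 :> R by rewrite pnatr_eq0 -lt0n.
have mR : m%:R != 0 :> R by rewrite pnatr_eq0 -lt0n.
have kR0 : 0 < k%:R :> R by rewrite ltr0n.
have lR0 : 0 < l%:R :> R by rewrite ltr0n.
have mR0 : 0 < m%:R :> R by rewrite ltr0n.
have sq : forall i j, X i j * X i j = 1.
  by move=> i j; case: (hpm i j) => ->; rewrite ?mulrNN mulr1.
have nX : forall i j, `|X i j| = 1.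
  by move=> i j; case: (hpm i j) => ->; rewrite ?normrN normr1.
have dXX : forall i, (X *m X^T) i i = l%:R.
  move=> i; rewrite mxE (eq_bigr (fun _ => 1)); last by move=> j _; rewrite mxE sq.
  by rewrite sumr_const card_ord.
have dXtX : forall j, (X^T *m X) j j = k%:R.
  move=> j; rewrite mxE (eq_bigr (fun _ => 1)); last by move=> i _; rewrite mxE sq.
  by rewrite sumr_const card_ord.
have symXtX : forall i j, (X^T *m X) i j = (X^T *m X) j i.
  by move=> i j; rewrite !mxE; apply: eq_bigr => ? _; rewrite !mxE mulrC.
have h2 : (X^T *m X) *m (X^T *m X) = a *: (X^T *m X).
  by rewrite -mulmxA [X *m (X^T *m X)]mulmxA ha -scalemxAr.
have a_gt0 : 0 < a.
  pose j0 : 'I_l := Ordinal l0.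
  have := congr1 (fun M : 'M[R]_l => M j0 j0) h2; rewrite /= [in RHS]mxE dXtX mxE.
  rewrite (bigD1 j0) //= dXtX.
  have : 0 <= \sum_(j < l | j != j0) (X^T *m X) j0 j * (X^T *m X) j j0.
    by apply: sumr_ge0 => j _; rewrite symXtX -expr2 sqr_ge0.
  nra.
have a0 : a != 0 by rewrite gt_eqF.
have [U [hUU sU]] : exists U : 'M[R]_(m, k), U *m U^T = 1%:M /\ (U <= X^T)%MS.
  rewrite -rX -mxrank_tr.
  have [|U [h1 h2']] := @gs_lemma _ _ _ (row_base X^T); first by rewrite eq_row_base.
  by exists U; split => //; rewrite (submx_trans h2') // eq_row_base.
have rU : \rank U = m.
  apply/eqP; rewrite eqn_leq rank_leq_row /=.
  by have := mxrankM_maxl U U^T; rewrite hUU mxrank1.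
have sXU : (X^T <= U)%MS.
  by have := mxrank_leqif_sup sU => /leqifP; rewrite mxrank_tr rX rU ltnn; case: ifP.
have UtU := @proj_lemma _ _ _ _ _ _ _ a0 ha hUU sU sXU.
have trXX : \tr (X *m X^T) = (k * l)%:R.
  by rewrite /mxtrace (eq_bigr _ (fun i _ => dXX i)) sumr_const card_ord mulnC mulrnA.
have aE : a = (k * l)%:R / m%:R.
  have := congr1 mxtrace UtU; rewrite mxtrace_mulC hUU mxtrace1 mxtraceZ trXX => ->.
  rewrite natrM; field; rewrite kR lR a0 //.
pose s := Num.sqrt (k%:R / m%:R : R).
pose t := Num.sqrt (m%:R : R) / k%:R.
have s2 : s * s = k%:R / m%:R.
  by rewrite -expr2 sqr_sqrtr // divr_ge0 // ltW.
have t2 : t * t = m%:R / (k%:R * k%:R).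
  rewrite /t mulrACA -expr2 sqr_sqrtr ?ltW // invfM //.
have t0 : 0 <= t by rewrite divr_ge0 ?sqrtr_ge0 // ltW.
pose V := s *: U.
pose W := t *: (V *m X).
have XXt : X *m X^T = a *: (U^T *m U) by rewrite UtU scalerA divff // scale1r.
have VtV : V^T *m V = l%:R^-1 *: (X *m X^T).
  rewrite /V [(s *: U)^T]linearZ /= -scalemxAl -scalemxAr scalerA UtU scalerA s2 aE.
  congr (_ *: _); rewrite natrM; field; rewrite ?kR ?lR ?mR //.
have VVt : V *m V^T = (k%:R / m%:R)%:M.
  by rewrite /V [(s *: U)^T]linearZ /= -scalemxAl -scalemxAr scalerA s2 hUU scalemx1.
have VtW : V^T *m W = (t * l%:R^-1 * a) *: X.
  rewrite /W -scalemxAr mulmxA VtV -scalemxAl ha !scalerA //.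
have WtW : W^T *m W = k%:R^-1 *: (X^T *m X).
  rewrite /W [(t *: (V *m X))^T]linearZ /= trmx_mul -scalemxAl -scalemxAr scalerA t2.
  rewrite !mulmxA -[X^T *m V^T *m V]mulmxA VtV -scalemxAr -scalemxAl.
  rewrite -[X^T *m (X *m X^T) *m X]mulmxA ha -scalemxAr !scalerA aE.
  congr (_ *: _); rewrite natrM; field; rewrite ?kR ?lR ?mR //.
have WWt : W *m W^T = (l%:R / m%:R)%:M.
  rewrite /W [(t *: (V *m X))^T]linearZ /= trmx_mul -scalemxAl -scalemxAr scalerA t2.
  rewrite mulmxA -[V *m X *m X^T]mulmxA XXt /V [(s *: U)^T]linearZ /=.
  rewrite -!scalemxAl -!scalemxAr !scalerA.
  rewrite -scalemxAl scalerA !mulmxA hUU mul1mx hUU scalemx1; congr (_%:M).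
  rewrite s2 aE natrM; field; rewrite ?kR ?lR ?mR //.
exists V, W; split; [|split].
- split; [|split] => //.
    by move=> i; rewrite VtV mxE dXX mulVf.
  exists (l%:R^-1 * cr) => i j ij.
  rewrite VtV mxE normrM ger0_norm ?invr_ge0 ?ler0n //.
  by have := hcr i j ij; rewrite mxE => ->.
- split; [|split] => //.
    by move=> i; rewrite WtW mxE dXtX mulVf.
  exists (k%:R^-1 * cc) => i j ij.
  rewrite WtW mxE normrM ger0_norm ?invr_ge0 ?ler0n //.
  by have := hcc i j ij; rewrite mxE => ->.
- exists (t * l%:R^-1 * a) => i j.
  rewrite VtW mxE normrM nX mulr1 ger0_norm //.
  apply: mulr_ge0; [apply: mulr_ge0; [exact: t0 | by rewrite invr_ge0 ler0n] | exact: ltW].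
Qed.

Lemma sum_sq_const (R : realType) n (j0 : 'I_n) (f : 'I_n -> R) c :
  (forall j, j != j0 -> `|f j| = c) ->
  \sum_(j < n | j != j0) f j * f j = c ^+ 2 *+ n.-1.
Proof.
move=> h; rewrite (eq_bigr (fun _ => c ^+ 2)); last first.
  by move=> j hj; rewrite -(h j hj) real_normK ?num_real // expr2.
by rewrite sumr_const cardC1 card_ord.
Qed.

Lemma etf_facts (R : realType) m n (V : 'M[R]_(m, n)) (hm : (0 < m)%N) (hn : (1 < n)%N) :
  is_ETF V -> exists c : R, (forall i j, i != j -> `|(V^T *m V) i j| = c) /\
    c = Num.sqrt ((n%:R - m%:R) / (m%:R * (n%:R - 1))).
Proof.
case=> hd [[c hc] hV]; exists c; split => //.
pose G := V^T *m V.
have GG : G *m G = (n%:R / m%:R) *: G.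
  by rewrite /G mulmxA -[V^T *m V *m V^T]mulmxA hV mul_mx_scalar -scalemxAl.
have symG : forall i j, G i j = G j i.
  by move=> i j; rewrite !mxE; apply: eq_bigr => ? _; rewrite !mxE mulrC.
pose j0 : 'I_n := Ordinal (ltnW hn).
pose j1 : 'I_n := Ordinal hn.
have j01 : j1 != j0 by [].
have c0 : 0 <= c by rewrite -(hc j1 j0 j01) normr_ge0.
have := congr1 (fun M : 'M[R]_n => M j0 j0) GG; rewrite /= [in RHS]mxE mxE.
rewrite (bigD1 j0) //= hd mulr1.
rewrite (eq_bigr (fun j => G j0 j * G j0 j)); last by move=> j _; rewrite symG.
rewrite (@sum_sq_const _ _ j0 _ c); last by move=> j hj; rewrite hc // eq_sym.
move=> h.
have nR : (n.-1)%:R = n%:R - 1 :> R.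
  by rewrite -[in RHS](prednK (ltnW hn)) -natr1 addrK.
have n1 : n%:R - 1 != 0 :> R.
  by rewrite -nR pnatr_eq0 -lt0n -ltnS prednK // ltnW.
have mR : m%:R != 0 :> R by rewrite pnatr_eq0 -lt0n.
have c2 : c ^+ 2 = (n%:R - m%:R) / (m%:R * (n%:R - 1)).
  move: h; rewrite -mulr_natr nR mulr1 => h.
  have -> : c ^+ 2 = (c ^+ 2 * (n%:R - 1)) / (n%:R - 1) by field.
  have -> : c ^+ 2 * (n%:R - 1) = n%:R / m%:R - 1 by rewrite -h; ring.
  by field; rewrite n1 mR.
by rewrite -c2 sqrtr_sqr ger0_norm.
Qed.

Lemma fwd (R : realType) k l m (hm : (1 < m)%N) (hk : (m <= k)%N) (hl : (m <= l)%N)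
  (V : 'M[R]_(m, k)) (W : 'M[R]_(m, l)) :
  is_ETF V -> is_ETF W -> mutually_unbiased V W ->
  let X := Num.sqrt (m%:R : R) *: (V^T *m W) in
  good_X m X /\ X *m X^T *m X = ((k * l)%:R / m%:R) *: X /\
  X *m X^T = l%:R *: (V^T *m V) /\ X^T *m X = k%:R *: (W^T *m W).
Proof.
case=> hdV [[cV hcV] hV]; case=> hdW [[cW hcW] hW]; case=> c hc X.
have k0 : (0 < k)%N by lia.
have l0 : (0 < l)%N by lia.
have m0 : (0 < m)%N by lia.
have kR : k%:R != 0 :> R by rewrite pnatr_eq0 -lt0n.
have lR : l%:R != 0 :> R by rewrite pnatr_eq0 -lt0n.
have mR : m%:R != 0 :> R by rewrite pnatr_eq0 -lt0n.
have mR0 : 0 < m%:R :> R by rewrite ltr0n.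
pose sm := Num.sqrt (m%:R : R).
have smsm : sm * sm = m%:R by rewrite -expr2 sqr_sqrtr // ltW.
have sm0 : sm != 0 by rewrite sqrtr_eq0 -ltNge.
have sm_ge0 : 0 <= sm by rewrite sqrtr_ge0.
pose y := V^T *m W.
have yyt : y *m y^T = (l%:R / m%:R) *: (V^T *m V).
  by rewrite /y trmx_mul trmxK mulmxA -[V^T *m W *m W^T]mulmxA hW mul_mx_scalar -scalemxAl.
have yty : y^T *m y = (k%:R / m%:R) *: (W^T *m W).
  by rewrite /y trmx_mul trmxK mulmxA -[W^T *m V *m V^T]mulmxA hV mul_mx_scalar -scalemxAl.
pose i0 : 'I_k := Ordinal k0.
pose j0 : 'I_l := Ordinal l0.
have c0 : 0 <= c by rewrite -(hc i0 j0) normr_ge0.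
have c2 : c ^+ 2 = m%:R^-1.
  have := congr1 (fun M : 'M[R]_k => M i0 i0) yyt; rewrite /= [in RHS]mxE hdV mulr1 mxE.
  rewrite (eq_bigr (fun _ => c ^+ 2)); last first.
    by move=> j _; rewrite [y^T j i0]mxE -(hc i0 j) real_normK ?num_real // expr2.
  rewrite sumr_const card_ord => h0.
  have h : c ^+ 2 * l%:R = l%:R / m%:R by rewrite mulr_natr.
  have -> : c ^+ 2 = c ^+ 2 * l%:R / l%:R by field.
  by rewrite h; field; rewrite mR lR.
have nX : forall i j, `|X i j| = 1.
  move=> i j; rewrite /X mxE normrM (hc i j) ger0_norm //.
  apply/eqP; rewrite -sqrp_eq1 ?mulr_ge0 // exprMn c2 sqr_sqrtr ?ltW //.
  by rewrite mulfV.
have XXt : X *m X^T = l%:R *: (V^T *m V).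
  rewrite /X [(sm *: y)^T]linearZ /= -scalemxAl -scalemxAr scalerA smsm -/y yyt scalerA.
  by congr (_ *: _); field.
have XtX : X^T *m X = k%:R *: (W^T *m W).
  rewrite /X [(sm *: y)^T]linearZ /= -scalemxAl -scalemxAr scalerA smsm -/y yty scalerA.
  by congr (_ *: _); field.
have XXtX : X *m X^T *m X = ((k * l)%:R / m%:R) *: X.
  rewrite XXt -scalemxAl /X -scalemxAr mulmxA -[V^T *m V *m V^T]mulmxA hV.
  rewrite mul_mx_scalar -scalemxAl !scalerA; congr (_ *: _).
  by rewrite natrM; field.
have rX : \rank X = m.
  rewrite /X mxrank_scale_nz //; apply/eqP; rewrite eqn_leq.
  rewrite (leq_trans (mxrankM_maxr _ _) (rank_leq_row W)) /=.
  have e : V *m y *m W^T = (k%:R / m%:R * (l%:R / m%:R)) *: 1%:M.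
    by rewrite /y mulmxA hV -mulmxA hW -scalar_mxM scalemx1.
  have := mxrankM_maxl (V *m y) W^T; rewrite e mxrank_scale_nz ?mxrank1; last first.
    by rewrite mulf_neq0 // mulf_neq0 // invr_eq0.
  move=> h; apply: leq_trans h _; exact: mxrankM_maxr.
split; last by [].
split.
  move=> i j; have := nX i j.
  have /real_normK : X i j \is Num.real by apply: num_real.
  move=> e1 e2; have : X i j ^+ 2 == 1 by rewrite -e1 e2 expr1n.
  by rewrite sqrf_eq1 => /orP [] /eqP ->; [left|right].
split; first by exists ((k * l)%:R / m%:R).
split.
  exists (l%:R * cV) => i i' ii'.
  by rewrite mxE XXt mxE normrM ger0_norm ?ler0n // hcV.
split => //.
exists (k%:R * cW) => j j' jj'.
by rewrite mxE XtX mxE normrM ger0_norm ?ler0n // hcW.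
Qed.

Lemma int_mul (R : realType) p q r (A : 'M[R]_(p, q)) (B : 'M[R]_(q, r)) :
  (forall i j, A i j \is a Num.int) -> (forall i j, B i j \is a Num.int) ->
  forall i j, (A *m B) i j \is a Num.int.
Proof.
move=> hA hB i j; rewrite mxE; apply: rpred_sum => k _; exact: rpredM.
Qed.

Lemma int_abs (R : realType) (x : R) : x \is a Num.int -> is_integer `|x|.
Proof. by move=> /intrP [z ->]; exists `|z|; rewrite intr_norm. Qed.

Theorem proposition2 (R : realType) (k l m : nat)
  (hm : (1 < m)%N) (hk : (m <= k)%N) (hl : (m <= l)%N) :
  (exists_MU_ETFs R m k l <-> exists X : 'M[R]_(k, l), good_X m X) /\
  (exists_MU_ETFs R m k l ->
     is_integer ((k * l)%:R / m%:R : R) /\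
     is_integer (k%:R * Num.sqrt ((l%:R - m%:R) / (m%:R * (l%:R - 1))) : R) /\
     is_integer (l%:R * Num.sqrt ((k%:R - m%:R) / (m%:R * (k%:R - 1))) : R)).
Proof.
split.
  split; last by case=> X hX; exact: (@bwd _ _ _ _ hm hk hl _ hX).
  case=> V [W [hV [hW hVW]]].
  have [h _] := @fwd _ _ _ _ hm hk hl _ _ hV hW hVW.
  by eexists; exact: h.
case=> V [W [hV [hW hVW]]].
have [hg [XXtX [XXt XtX]]] := @fwd _ _ _ _ hm hk hl _ _ hV hW hVW.
move: hg XXtX XXt XtX; set X := Num.sqrt (m%:R : R) *: (V^T *m W).
clearbody X; case=> hpm _ XXtX XXt XtX.
have Xint : forall i j, X i j \is a Num.int.
  by move=> i j; case: (hpm i j) => ->; rewrite ?rpredN rpred1.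
have Xtint : forall i j, X^T i j \is a Num.int by move=> i j; rewrite mxE.
have k0 : (0 < k)%N by lia.
have l0 : (0 < l)%N by lia.
have k1 : (1 < k)%N by lia.
have l1 : (1 < l)%N by lia.
have m0 : (0 < m)%N by lia.
pose i0 : 'I_k := Ordinal k0.
pose j0 : 'I_l := Ordinal l0.
split.
  apply/intrP.
  have -> : (k * l)%:R / m%:R = (X *m X^T *m X) i0 j0 * X i0 j0.
    rewrite XXtX mxE -mulrA.
    by case: (hpm i0 j0) => ->; rewrite ?mulrNN !mulr1.
  by apply: rpredM => //; apply: int_mul => //; apply: int_mul.
pose i1 : 'I_k := Ordinal k1.
pose j1 : 'I_l := Ordinal l1.
split.
  have [cW [hcW <-]] := @etf_facts _ _ _ _ m0 l1 hW.
  have -> : k%:R * cW = `|(X^T *m X) j0 j1|.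
    by rewrite XtX mxE normrM ger0_norm ?ler0n // hcW.
  by apply: int_abs; apply: int_mul.
have [cV [hcV <-]] := @etf_facts _ _ _ _ m0 k1 hV.
have -> : l%:R * cV = `|(X *m X^T) i0 i1|.
  by rewrite XXt mxE normrM ger0_norm ?ler0n // hcV.
by apply: int_abs; apply: int_mul.
Qed.
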